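(* Let $(M,g)$ be a Bianchi spacetime solving Einstein's equations $\mathrm{Ric}-\frac12Sg+\Lambda g=T$ with $\rho\geq0$ and $\Lambda\geq0$. Then for all $v\in\mathbb R^3$ and all $t\in I$ with $\theta(t)\neq0$, $$(2\delta^i_m-3\Sigma^i{}_m)a^{mj}v_iv_j\geq-\frac32\frac{\bar S_+}{\theta^2}a^{ij}v_iv_j,$$ where $\bar S_+=\max\{\bar S,0\}$.
   Context: A Bianchi spacetime is $M=G\times I$, $I=(t_-,t_+)$, with $G$ a connected 3-dimensional Lie group, $g=-dt\otimes dt+a_{ij}(t)\xi^i\otimes\xi^j$, $\{\xi^i\}$ dual to a basis $\{e_i\}$ of left invariant vector fields, $a(t)$ positive definite with inverse entries $a^{ij}$. $\bar k_{ij}=\frac12\dot a_{ij}$, $\theta=a^{ij}\bar k_{ij}$, $\bar\sigma_{ij}=\bar k_{ij}-\frac13\theta a_{ij}$, $\Sigma_{ij}=\bar\sigma_{ij}/\theta$, $\Sigma^i{}_m=a^{ij}\Sigma_{jm}$. $\rho=T_{00}$ in the frame $\partial_t,e_i$. $\bar S$ is the scalar curvature of $G\times\{t\}$ with the induced metric. Summation over repeated indices. *)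

(* Defs.v *)
From Stdlib Require Import Reals.
Open Scope R_scope.

Fixpoint rsum (n : nat) (f : nat -> R) : R :=
  match n with O => 0 | S m => rsum m f + f m end.

Definition kdelta (i j : nat) : R := if Nat.eqb i j then 1 else 0.

(* ---------- Generic curvature of a metric in a (non-holonomic) frame {e_0..e_(n-1)} ----------
   g a b      = g(e_a,e_b),  ginv = inverse matrix,
   dg x a b   = e_x (g(e_a,e_b)),
   C c a b    = structure functions: [e_a,e_b] = sum_c C c a b e_c,
   dGam x f a b = e_x (Gam f a b).                                              *)

(* Koszul formula: Gam_low c a b = g(nabla_{e_a} e_b, e_c) *)
Definition Gam_low (n : nat) (g : nat -> nat -> R) (dg : nat -> nat -> nat -> R)
  (C : nat -> nat -> nat -> R) (c a b : nat) : R :=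
  / 2 * (dg a b c + dg b a c - dg c a b
         + rsum n (fun d => C d a b * g d c)
         - rsum n (fun d => C d a c * g d b)
         - rsum n (fun d => C d b c * g d a)).

(* nabla_{e_a} e_b = sum_c Gam c a b e_c *)
Definition Gam (n : nat) (g ginv : nat -> nat -> R) (dg : nat -> nat -> nat -> R)
  (C : nat -> nat -> nat -> R) (c a b : nat) : R :=
  rsum n (fun d => ginv c d * Gam_low n g dg C d a b).

(* R(e_a,e_b) e_c = sum_f Riem f c a b e_f, with R(X,Y)=[nabla_X,nabla_Y]-nabla_[X,Y] *)
Definition Riem (n : nat) (g ginv : nat -> nat -> R) (dg : nat -> nat -> nat -> R)
  (C : nat -> nat -> nat -> R) (dGam : nat -> nat -> nat -> nat -> R)
  (f c a b : nat) : R :=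
  let G := Gam n g ginv dg C in
  dGam a f b c - dGam b f a c
  + rsum n (fun d => G d b c * G f a d - G d a c * G f b d - C d a b * G f d c).

(* Ric(e_b,e_c) = trace of X |-> R(X,e_b)e_c *)
Definition Ric (n : nat) (g ginv : nat -> nat -> R) (dg : nat -> nat -> nat -> R)
  (C : nat -> nat -> nat -> R) (dGam : nat -> nat -> nat -> nat -> R) (b c : nat) : R :=
  rsum n (fun a => Riem n g ginv dg C dGam a c a b).

Definition Scal (n : nat) (g ginv : nat -> nat -> R) (dg : nat -> nat -> nat -> R)
  (C : nat -> nat -> nat -> R) (dGam : nat -> nat -> nat -> nat -> R) : R :=
  rsum n (fun b => rsum n (fun c => ginv b c * Ric n g ginv dg C dGam b c)).

Definition det3 (m : nat -> nat -> R) : R :=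
  m 0%nat 0%nat * (m 1%nat 1%nat * m 2%nat 2%nat - m 1%nat 2%nat * m 2%nat 1%nat)
  - m 0%nat 1%nat * (m 1%nat 0%nat * m 2%nat 2%nat - m 1%nat 2%nat * m 2%nat 0%nat)
  + m 0%nat 2%nat * (m 1%nat 0%nat * m 2%nat 1%nat - m 1%nat 1%nat * m 2%nat 0%nat).

(* inverse via the adjugate: inv3 m i j = cofactor(j,i)/det *)
Definition inv3 (m : nat -> nat -> R) (i j : nat) : R :=
  let i1 := ((j + 1) mod 3)%nat in let i2 := ((j + 2) mod 3)%nat in
  let j1 := ((i + 1) mod 3)%nat in let j2 := ((i + 2) mod 3)%nat in
  (m i1 j1 * m i2 j2 - m i1 j2 * m i2 j1) / det3 m.

Definition sym_posdef3 (m : nat -> nat -> R) : Prop :=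
  (forall i j, (i < 3)%nat -> (j < 3)%nat -> m i j = m j i) /\
  (forall v : nat -> R, (exists i, (i < 3)%nat /\ v i <> 0) ->
     rsum 3 (fun i => rsum 3 (fun j => m i j * v i * v j)) > 0).

(* ---------- structure constants of a 3-dim real Lie algebra ----------
   gam k i j : [e_i,e_j] = sum_k gam k i j e_k *)
Definition lie_structure_constants (gam : nat -> nat -> nat -> R) : Prop :=
  (forall k i j, gam k i j = - gam k j i) /\
  (forall i j k m, (i < 3)%nat -> (j < 3)%nat -> (k < 3)%nat -> (m < 3)%nat ->
     rsum 3 (fun d => gam d i j * gam m d k + gam d j k * gam m d i
                      + gam d k i * gam m d j) = 0).

(* ---------- the Bianchi spacetime in the frame (d/dt, e_1, e_2, e_3) ----------
   spacetime frame index 0 = d/dt, index (S i) = e_(i+1) (spatial index i in 0..2).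
   a t i j = a_ij(t), a1 t i j = d/dt a_ij(t). *)
Definition g4 (a : R -> nat -> nat -> R) (t : R) (x y : nat) : R :=
  match x, y with
  | O, O => -1
  | O, S _ | S _, O => 0
  | S i, S j => a t i j
  end.

Definition g4inv (a : R -> nat -> nat -> R) (t : R) (x y : nat) : R :=
  match x, y with
  | O, O => -1
  | O, S _ | S _, O => 0
  | S i, S j => inv3 (a t) i j
  end.

(* dg4 x y z = e_x (g(e_y,e_z)); only d/dt acts nontrivially on functions of t *)
Definition dg4 (a1 : R -> nat -> nat -> R) (t : R) (x y z : nat) : R :=
  match x, y, z with
  | O, S i, S j => a1 t i j
  | _, _, _ => 0
  end.

(* [d/dt, e_i] = 0, [e_i,e_j] = gam^k_ij e_k *)
Definition C4 (gam : nat -> nat -> nat -> R) (c x y : nat) : R :=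
  match c, x, y with
  | S k, S i, S j => gam k i j
  | _, _, _ => 0
  end.

Definition Gam4 (gam : nat -> nat -> nat -> R) (a a1 : R -> nat -> nat -> R)
  (t : R) (c x y : nat) : R :=
  Gam 4 (g4 a t) (g4inv a t) (dg4 a1 t) (C4 gam) c x y.

(* dG t f y z = d/dt Gam4 f y z at t; spatial frame derivatives vanish *)
Definition dGam4 (dG : R -> nat -> nat -> nat -> R) (t : R) (x f y z : nat) : R :=
  match x with O => dG t f y z | S _ => 0 end.

Definition Ric4 gam a a1 dG t (x y : nat) : R :=
  Ric 4 (g4 a t) (g4inv a t) (dg4 a1 t) (C4 gam) (dGam4 dG t) x y.

Definition Scal4 gam a a1 dG t : R :=
  Scal 4 (g4 a t) (g4inv a t) (dg4 a1 t) (C4 gam) (dGam4 dG t).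

(* scalar curvature of G x {t} with the left-invariant metric a(t) *)
Definition Sbar (gam : nat -> nat -> nat -> R) (a : R -> nat -> nat -> R) (t : R) : R :=
  Scal 3 (a t) (inv3 (a t)) (fun _ _ _ => 0) gam (fun _ _ _ _ => 0).

Definition kbar (a1 : R -> nat -> nat -> R) (t : R) (i j : nat) : R := / 2 * a1 t i j.

Definition theta (a a1 : R -> nat -> nat -> R) (t : R) : R :=
  rsum 3 (fun i => rsum 3 (fun j => inv3 (a t) i j * kbar a1 t i j)).

Definition sigmabar a a1 t (i j : nat) : R :=
  kbar a1 t i j - / 3 * theta a a1 t * a t i j.

Definition Sigma_low a a1 t (i j : nat) : R := sigmabar a a1 t i j / theta a a1 t.

Definition Sigma_up a a1 t (i m : nat) : R :=
  rsum 3 (fun j => inv3 (a t) i j * Sigma_low a a1 t j m).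

Definition is_open_interval (I : R -> Prop) : Prop :=
  (exists t, I t) /\
  (forall x y z, I x -> I z -> x <= y <= z -> I y) /\
  (forall x, I x -> exists eps, eps > 0 /\ forall y, Rabs (y - x) < eps -> I y).

(* Main.v *)
Require Import Defs.
From Stdlib Require Import Reals Lra Psatz Lia FunctionalExtensionality.
Open Scope R_scope.

Lemma eucl (u : nat -> R) (S : nat -> nat -> R)
  (S10 : S 1%nat 0%nat = S 0%nat 1%nat) (S20 : S 2%nat 0%nat = S 0%nat 2%nat)
  (S21 : S 2%nat 1%nat = S 1%nat 2%nat)
  (Str : S 0%nat 0%nat + S 1%nat 1%nat + S 2%nat 2%nat = 0) :
  (rsum 3 (fun i => rsum 3 (fun j => S i j * u i * u j))) ^ 2 <=
  2 / 3 * rsum 3 (fun i => rsum 3 (fun j => S i j * S i j))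
        * (rsum 3 (fun i => u i * u i)) ^ 2.
Proof.
  set (N := rsum 3 (fun i => u i * u i)).
  set (x := rsum 3 (fun i => rsum 3 (fun j => S i j * u i * u j))).
  set (T2 := rsum 3 (fun i => rsum 3 (fun j => S i j * S i j))).
  set (Su := fun i => rsum 3 (fun j => S i j * u j)).
  set (P := fun i j => (if Nat.eqb i j then N else 0) - u i * u j).
  set (PSP := fun i j => rsum 3 (fun k => rsum 3 (fun l => P i k * S k l * P l j))).
  set (M := fun i j => PSP i j + x / 2 * P i j).
  assert (Hid : N ^ 2 * (N ^ 2 * T2 - 3 / 2 * x ^ 2) =
     2 * N ^ 2 * ((u 0%nat * Su 1%nat - u 1%nat * Su 0%nat) ^ 2
                + (u 0%nat * Su 2%nat - u 2%nat * Su 0%nat) ^ 2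
                + (u 1%nat * Su 2%nat - u 2%nat * Su 1%nat) ^ 2)
     + rsum 3 (fun i => rsum 3 (fun j => M i j * M i j))).
  { unfold M, PSP, P, Su, T2, x, N. simpl.
    rewrite S10, S20, S21.
    replace (S 2%nat 2%nat) with (- S 0%nat 0%nat - S 1%nat 1%nat) by lra.
    field. }
  assert (HN : 0 <= N) by (unfold N; simpl; nra).
  destruct (Req_dec N 0) as [H0|H0].
  - assert (u 0%nat = 0 /\ u 1%nat = 0 /\ u 2%nat = 0) as (U0 & U1 & U2).
    { unfold N in H0; simpl in H0. repeat split; nra. }
    unfold x, N; simpl; rewrite U0, U1, U2; lra.
  - assert (Hpos : 0 <= rsum 3 (fun i => rsum 3 (fun j => M i j * M i j))).
    { simpl. nra. }
    assert (0 < N ^ 2) by (apply pow_lt; lra).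
    assert (0 <= N ^ 2 * T2 - 3 / 2 * x ^ 2).
    { apply Rmult_le_reg_l with (N ^ 2); [lra|]. rewrite Rmult_0_r, Hid.
      apply Rplus_le_le_0_compat; [|exact Hpos].
      apply Rmult_le_pos; [apply Rmult_le_pos; [lra| apply pow2_ge_0]|].
      repeat apply Rplus_le_le_0_compat; apply pow2_ge_0. }
    nra.
Qed.
Definition vec3 (x y z : R) (i : nat) : R :=
  match i with 0%nat => x | 1%nat => y | _ => z end.

Ltac usepd Hp v i := let H := fresh in
  assert (H : exists j, (j < 3)%nat /\ v j <> 0) by (exists i; split; [lia | simpl; intro; nra]);
  generalize (Hp v H); clear H.

Lemma pd_facts M : sym_posdef3 M ->
  M 0%nat 0%nat > 0 /\
  M 0%nat 0%nat * M 1%nat 1%nat - M 0%nat 1%nat * M 0%nat 1%nat > 0 /\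
  det3 M > 0.
Proof.
  intros [Hs Hp].
  assert (S10 : M 1%nat 0%nat = M 0%nat 1%nat) by (apply Hs; lia).
  assert (S20 : M 2%nat 0%nat = M 0%nat 2%nat) by (apply Hs; lia).
  assert (S21 : M 2%nat 1%nat = M 1%nat 2%nat) by (apply Hs; lia).
  assert (H0 : M 0%nat 0%nat > 0).
  { usepd Hp (vec3 1 0 0) 0%nat. simpl; lra. }
  set (d2 := M 0%nat 0%nat * M 1%nat 1%nat - M 0%nat 1%nat * M 0%nat 1%nat).
  assert (H1 : d2 > 0).
  { usepd Hp (vec3 (- M 0%nat 1%nat) (M 0%nat 0%nat) 0) 1%nat.
    simpl. rewrite S10. intro H.
    assert (E : M 0%nat 0%nat * d2 > 0) by (unfold d2; nra).
    apply Rmult_lt_reg_l with (M 0%nat 0%nat); lra. }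
  split; [exact H0|split; [exact H1|]].
  usepd Hp (vec3 (M 0%nat 1%nat * M 1%nat 2%nat - M 0%nat 2%nat * M 1%nat 1%nat)
                     (M 0%nat 2%nat * M 0%nat 1%nat - M 0%nat 0%nat * M 1%nat 2%nat)
                     d2) 2%nat.
  simpl. rewrite S10, S20, S21. intro H.
  assert (E : d2 * det3 M > 0).
  { unfold det3; rewrite S10, S20, S21. unfold d2 in *. nra. }
  apply Rmult_lt_reg_l with d2; lra.
Qed.

Definition Fch (M : nat -> nat -> R) (i j : nat) : R :=
  let f00 := sqrt (M 0%nat 0%nat) in
  let f10 := M 0%nat 1%nat / f00 in
  let f20 := M 0%nat 2%nat / f00 in
  let f11 := sqrt (M 1%nat 1%nat - f10 * f10) in
  let f21 := (M 1%nat 2%nat - f10 * f20) / f11 in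
  let f22 := sqrt (M 2%nat 2%nat - f20 * f20 - f21 * f21) in
  match i, j with
  | 0%nat, 0%nat => f00
  | 1%nat, 0%nat => f10 | 1%nat, 1%nat => f11
  | 2%nat, 0%nat => f20 | 2%nat, 1%nat => f21 | 2%nat, 2%nat => f22
  | _, _ => 0 end.

Lemma chol M : sym_posdef3 M ->
  forall i j, (i < 3)%nat -> (j < 3)%nat -> M i j = rsum 3 (fun k => Fch M i k * Fch M j k).
Proof.
  intros HM.
  destruct (pd_facts M HM) as (H0 & H1 & H2).
  destruct HM as [Hs _].
  assert (S10 : M 1%nat 0%nat = M 0%nat 1%nat) by (apply Hs; lia).
  assert (S20 : M 2%nat 0%nat = M 0%nat 2%nat) by (apply Hs; lia).
  assert (S21 : M 2%nat 1%nat = M 1%nat 2%nat) by (apply Hs; lia).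
  set (f00 := sqrt (M 0%nat 0%nat)).
  assert (F00 : f00 * f00 = M 0%nat 0%nat) by (apply sqrt_sqrt; lra).
  assert (F00p : f00 > 0) by (apply sqrt_lt_R0; lra).
  set (f10 := M 0%nat 1%nat / f00).
  set (f20 := M 0%nat 2%nat / f00).
  assert (E1 : M 1%nat 1%nat - f10 * f10 =
     (M 0%nat 0%nat * M 1%nat 1%nat - M 0%nat 1%nat * M 0%nat 1%nat) / M 0%nat 0%nat).
  { unfold f10. rewrite <- F00. field. lra. }
  set (f11 := sqrt (M 1%nat 1%nat - f10 * f10)).
  assert (P1 : M 1%nat 1%nat - f10 * f10 > 0).
  { rewrite E1. apply Rdiv_lt_0_compat; lra. }
  assert (F11 : f11 * f11 = M 1%nat 1%nat - f10 * f10) by (apply sqrt_sqrt; lra).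
  assert (F11p : f11 > 0) by (apply sqrt_lt_R0; lra).
  set (f21 := (M 1%nat 2%nat - f10 * f20) / f11).
  assert (E2 : M 2%nat 2%nat - f20 * f20 - f21 * f21 =
     det3 M / (M 0%nat 0%nat * M 1%nat 1%nat - M 0%nat 1%nat * M 0%nat 1%nat)).
  { assert (G : f21 * f21 = (M 1%nat 2%nat - f10 * f20) * (M 1%nat 2%nat - f10 * f20)
                 / (M 1%nat 1%nat - f10 * f10)).
    { unfold f21. rewrite <- F11. field. lra. }
    rewrite G, E1. unfold f10, f20. unfold det3. rewrite S10, S20, S21.
    rewrite <- F00. field. split; [|lra].
    replace (f00 * f00 * M 1%nat 1%nat - M 0%nat 1%nat * M 0%nat 1%nat)
      with (M 0%nat 0%nat * M 1%nat 1%nat - M 0%nat 1%nat * M 0%nat 1%nat) by (rewrite <- F00; ring).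
    lra. }
  assert (P2 : M 2%nat 2%nat - f20 * f20 - f21 * f21 > 0).
  { rewrite E2. apply Rdiv_lt_0_compat; lra. }
  assert (F22 : sqrt (M 2%nat 2%nat - f20 * f20 - f21 * f21) * sqrt (M 2%nat 2%nat - f20 * f20 - f21 * f21)
                = M 2%nat 2%nat - f20 * f20 - f21 * f21) by (apply sqrt_sqrt; lra).
  intros i j Hi Hj.
  destruct i as [|[|[|i]]]; try lia; destruct j as [|[|[|j]]]; try lia;
  unfold Fch; cbv zeta; fold f00 f10 f20 f11 f21; simpl;
  try rewrite S10; try rewrite S20; try rewrite S21.
  all: try (rewrite F22).
  all: try (rewrite F11; ring).
  all: try (rewrite F00; ring).
  all: try (unfold f21).
  all: try (unfold f10, f20).
  all: try (field; lra).
Qed.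

Lemma Lsig (B s : nat -> nat -> R) (v : nat -> R) :
  sym_posdef3 B ->
  s 1%nat 0%nat = s 0%nat 1%nat -> s 2%nat 0%nat = s 0%nat 2%nat -> s 2%nat 1%nat = s 1%nat 2%nat ->
  rsum 3 (fun i => rsum 3 (fun j => B i j * s i j)) = 0 ->
  (rsum 3 (fun l => rsum 3 (fun m =>
     rsum 3 (fun i => B l i * v i) * s l m * rsum 3 (fun j => B m j * v j)))) ^ 2 <=
  2 / 3 * rsum 3 (fun i => rsum 3 (fun j => rsum 3 (fun m => rsum 3 (fun l =>
              B i m * B j l * s i j * s m l))))
        * (rsum 3 (fun i => rsum 3 (fun j => B i j * v i * v j))) ^ 2.
Proof.
  intros HB s10 s20 s21 Htr.
  assert (HF : exists F : nat -> nat -> R, forall i j, (i < 3)%nat -> (j < 3)%nat ->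
             B i j = rsum 3 (fun k => F i k * F j k)).
  { exists (Fch B). apply chol; exact HB. }
  destruct HF as [F HF].
  assert (B00 := HF 0%nat 0%nat ltac:(lia) ltac:(lia)).
  assert (B01 := HF 0%nat 1%nat ltac:(lia) ltac:(lia)).
  assert (B02 := HF 0%nat 2%nat ltac:(lia) ltac:(lia)).
  assert (B10 := HF 1%nat 0%nat ltac:(lia) ltac:(lia)).
  assert (B11 := HF 1%nat 1%nat ltac:(lia) ltac:(lia)).
  assert (B12 := HF 1%nat 2%nat ltac:(lia) ltac:(lia)).
  assert (B20 := HF 2%nat 0%nat ltac:(lia) ltac:(lia)).
  assert (B21 := HF 2%nat 1%nat ltac:(lia) ltac:(lia)).
  assert (B22 := HF 2%nat 2%nat ltac:(lia) ltac:(lia)).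
  set (u := fun k => rsum 3 (fun i => F i k * v i)).
  set (S := fun k l => rsum 3 (fun i => rsum 3 (fun j => F i k * s i j * F j l))).
  assert (H := eucl u S).
  assert (E1 : rsum 3 (fun i => rsum 3 (fun j => S i j * u i * u j)) =
     rsum 3 (fun l => rsum 3 (fun m =>
       rsum 3 (fun i => B l i * v i) * s l m * rsum 3 (fun j => B m j * v j)))).
  { unfold S, u; simpl; rewrite B00, B01, B02, B10, B11, B12, B20, B21, B22; simpl;
    rewrite s10, s20, s21; ring. }
  assert (E2 : rsum 3 (fun i => u i * u i) = rsum 3 (fun i => rsum 3 (fun j => B i j * v i * v j))).
  { unfold u; simpl; rewrite B00, B01, B02, B10, B11, B12, B20, B21, B22; simpl; ring. }
  assert (E3 : rsum 3 (fun i => rsum 3 (fun j => S i j * S i j)) =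
     rsum 3 (fun i => rsum 3 (fun j => rsum 3 (fun m => rsum 3 (fun l =>
              B i m * B j l * s i j * s m l))))).
  { unfold S; simpl; rewrite B00, B01, B02, B10, B11, B12, B20, B21, B22; simpl;
    rewrite s10, s20, s21; ring. }
  rewrite <- E1, <- E2, <- E3. apply H.
  - unfold S; simpl; rewrite s10, s20, s21; ring.
  - unfold S; simpl; rewrite s10, s20, s21; ring.
  - unfold S; simpl; rewrite s10, s20, s21; ring.
  - rewrite <- Htr. unfold S; simpl; rewrite B00, B01, B02, B10, B11, B12, B20, B21, B22; simpl;
    rewrite s10, s20, s21; ring.
Qed.

Lemma final_arith q x th sg Sb : q >= 0 -> th <> 0 -> x ^ 2 <= 2 / 3 * sg * q ^ 2 ->
  sg <= Sb + 2 / 3 * th ^ 2 ->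
  2 * q - 3 / th * x >= - (3 / 2) * (Rmax Sb 0 / th ^ 2) * q.
Proof.
  intros Hq Hth Hx Hsg.
  set (c := Rmax Sb 0).
  assert (Hc0 : 0 <= c) by apply Rmax_r.
  assert (HcS : Sb <= c) by apply Rmax_l.
  assert (Hth2 : 0 < th ^ 2) by (assert (0 < th * th) by (destruct (Rlt_or_le 0 th); [nra|]; assert (th < 0) by (destruct H; [lra|exfalso; apply Hth; exact H]); nra); simpl; lra).
  set (Z := x * th). set (W := (2 / 3 * th ^ 2 + c / 2) * q).
  assert (HW : 0 <= W) by (unfold W; apply Rmult_le_pos; lra).
  assert (HZW : Z ^ 2 <= W ^ 2).
  { unfold Z, W.
    assert (x ^ 2 <= 2 / 3 * (c + 2 / 3 * th ^ 2) * q ^ 2).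
    { apply Rle_trans with (2 / 3 * sg * q ^ 2); [exact Hx|].
      assert (0 <= q ^ 2) by apply pow2_ge_0.
      apply Rmult_le_compat_r; lra. }
    assert (0 <= c ^ 2 * q ^ 2 / 4) by (assert (0 <= c ^ 2 * q ^ 2) by (apply Rmult_le_pos; apply pow2_ge_0); lra).
    replace ((x * th) ^ 2) with (x ^ 2 * th ^ 2) by ring.
    apply Rle_trans with (2 / 3 * (c + 2 / 3 * th ^ 2) * q ^ 2 * th ^ 2).
    - apply Rmult_le_compat_r; lra.
    - replace (((2 / 3 * th ^ 2 + c / 2) * q) ^ 2) with
        (2 / 3 * (c + 2 / 3 * th ^ 2) * q ^ 2 * th ^ 2 + c ^ 2 * q ^ 2 / 4) by field.
      lra. }
  assert (HZ : Z <= W).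
  { destruct (Rle_or_lt Z W) as [h|h]; [exact h|].
    exfalso. assert (W * W < Z * Z) by (apply Rmult_le_0_lt_compat; lra). nra. }
  assert (E : 2 * q - 3 / th * x - (- (3 / 2) * (c / th ^ 2) * q) = 3 * (W - Z) / th ^ 2).
  { unfold W, Z. field. exact Hth. }
  assert (0 <= 3 * (W - Z) / th ^ 2).
  { apply Rmult_le_pos; [lra | apply Rlt_le, Rinv_0_lt_compat; exact Hth2]. }
  lra.
Qed.

Lemma inv3_sym A : A 1%nat 0%nat = A 0%nat 1%nat -> A 2%nat 0%nat = A 0%nat 2%nat ->
  A 2%nat 1%nat = A 1%nat 2%nat ->
  forall i j, (i < 3)%nat -> (j < 3)%nat -> inv3 A i j = inv3 A j i.
Proof.
  intros S10 S20 S21 i j Hi Hj.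
  destruct i as [|[|[|i]]]; try lia; destruct j as [|[|[|j]]]; try lia;
  unfold inv3; simpl; rewrite ?S10, ?S20, ?S21; unfold Rdiv; ring.
Qed.

Lemma inv3_left A : det3 A <> 0 ->
  forall i j, (i < 3)%nat -> (j < 3)%nat -> rsum 3 (fun l => inv3 A i l * A l j) = kdelta i j.
Proof.
  intros Hd i j Hi Hj.
  destruct i as [|[|[|i]]]; try lia; destruct j as [|[|[|j]]]; try lia;
  unfold inv3, kdelta; simpl; unfold det3 in *; field; exact Hd.
Qed.

Lemma inv3_right A : det3 A <> 0 ->
  forall i j, (i < 3)%nat -> (j < 3)%nat -> rsum 3 (fun l => A i l * inv3 A l j) = kdelta i j.
Proof.
  intros Hd i j Hi Hj.
  destruct i as [|[|[|i]]]; try lia; destruct j as [|[|[|j]]]; try lia;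
  unfold inv3, kdelta; simpl; unfold det3 in *; field; exact Hd.
Qed.

Lemma inv3_pd A : sym_posdef3 A -> sym_posdef3 (inv3 A).
Proof.
  intros HA. destruct (pd_facts A HA) as (_ & _ & Hdet).
  destruct HA as [Hs Hp].
  assert (S10 : A 1%nat 0%nat = A 0%nat 1%nat) by (apply Hs; lia).
  assert (S20 : A 2%nat 0%nat = A 0%nat 2%nat) by (apply Hs; lia).
  assert (S21 : A 2%nat 1%nat = A 1%nat 2%nat) by (apply Hs; lia).
  split.
  - apply inv3_sym; assumption.
  - intros c [i0 [Hi0 Hc]].
    set (y := fun i => rsum 3 (fun k => inv3 A i k * c k)).
    assert (E : rsum 3 (fun i => rsum 3 (fun j => inv3 A i j * c i * c j)) =
                rsum 3 (fun i => rsum 3 (fun j => A i j * y i * y j))).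
    { unfold y, inv3; simpl. rewrite S10, S20, S21. unfold det3 in *. rewrite S10, S20, S21 in *.
      field. lra. }
    rewrite E. apply Hp.
    assert (Ec : forall i, (i < 3)%nat -> c i = rsum 3 (fun j => A i j * y j)).
    { intros i Hi. destruct i as [|[|[|i]]]; try lia;
      unfold y, inv3; simpl; unfold det3 in *; rewrite ?S10, ?S20, ?S21 in *; field; lra. }
    destruct (Req_dec (y 0%nat) 0) as [Y0|Y0]; [|exists 0%nat; split; [lia|exact Y0]].
    destruct (Req_dec (y 1%nat) 0) as [Y1|Y1]; [|exists 1%nat; split; [lia|exact Y1]].
    destruct (Req_dec (y 2%nat) 0) as [Y2|Y2]; [|exists 2%nat; split; [lia|exact Y2]].
    exfalso. apply Hc. rewrite (Ec i0 Hi0). simpl. rewrite Y0, Y1, Y2. ring.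
Qed.

Lemma trBA A : A 1%nat 0%nat = A 0%nat 1%nat -> A 2%nat 0%nat = A 0%nat 2%nat ->
  A 2%nat 1%nat = A 1%nat 2%nat -> det3 A <> 0 ->
  rsum 3 (fun i => rsum 3 (fun j => inv3 A i j * A i j)) = 3.
Proof. intros S10 S20 S21 Hd. unfold inv3; simpl. unfold det3 in *. rewrite ?S10, ?S20, ?S21 in *. field. exact Hd. Qed.

Lemma sqsig A K th : A 1%nat 0%nat = A 0%nat 1%nat -> A 2%nat 0%nat = A 0%nat 2%nat ->
  A 2%nat 1%nat = A 1%nat 2%nat -> det3 A <> 0 ->
  K 1%nat 0%nat = K 0%nat 1%nat -> K 2%nat 0%nat = K 0%nat 2%nat -> K 2%nat 1%nat = K 1%nat 2%nat ->
  th = rsum 3 (fun i => rsum 3 (fun j => inv3 A i j * (/2 * K i j))) ->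
  rsum 3 (fun i => rsum 3 (fun j => rsum 3 (fun m => rsum 3 (fun l =>
     inv3 A i m * inv3 A j l * (/2 * K i j - /3 * th * A i j) * (/2 * K m l - /3 * th * A m l)))))
  = rsum 3 (fun i => rsum 3 (fun j => rsum 3 (fun m => rsum 3 (fun l =>
     inv3 A i m * inv3 A j l * (/2 * K i j) * (/2 * K m l))))) - th ^ 2 / 3.
Proof.
  intros S10 S20 S21 Hd K10 K20 K21 Hth. subst th.
  unfold inv3; simpl. unfold det3 in *. rewrite ?S10, ?S20, ?S21, ?K10, ?K20, ?K21 in *. field. exact Hd.
Qed.

Lemma final_ineq A K Sb (v : nat -> R) th :
  sym_posdef3 A ->
  K 1%nat 0%nat = K 0%nat 1%nat -> K 2%nat 0%nat = K 0%nat 2%nat -> K 2%nat 1%nat = K 1%nat 2%nat ->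
  th = rsum 3 (fun i => rsum 3 (fun j => inv3 A i j * (/2 * K i j))) -> th <> 0 ->
  Sb + th ^ 2 - rsum 3 (fun i => rsum 3 (fun j => rsum 3 (fun m => rsum 3 (fun l =>
     inv3 A i m * inv3 A j l * (/2 * K i j) * (/2 * K m l))))) >= 0 ->
  rsum 3 (fun i => rsum 3 (fun m => rsum 3 (fun j =>
      (2 * kdelta i m - 3 * rsum 3 (fun l => inv3 A i l * ((/2 * K l m - /3 * th * A l m) / th)))
        * inv3 A m j * v i * v j)))
    >= - (3 / 2) * (Rmax Sb 0 / th ^ 2) * rsum 3 (fun i => rsum 3 (fun j => inv3 A i j * v i * v j)).
Proof.
  intros HA K10 K20 K21 Hth Hth0 Hcon.
  destruct (pd_facts A HA) as (_ & _ & Hdet).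
  assert (Hd : det3 A <> 0) by lra.
  assert (HB := inv3_pd A HA).
  destruct HA as [Hs _].
  assert (S10 : A 1%nat 0%nat = A 0%nat 1%nat) by (apply Hs; lia).
  assert (S20 : A 2%nat 0%nat = A 0%nat 2%nat) by (apply Hs; lia).
  assert (S21 : A 2%nat 1%nat = A 1%nat 2%nat) by (apply Hs; lia).
  assert (B10 : inv3 A 1%nat 0%nat = inv3 A 0%nat 1%nat) by (apply inv3_sym; auto).
  assert (B20 : inv3 A 2%nat 0%nat = inv3 A 0%nat 2%nat) by (apply inv3_sym; auto).
  assert (B21 : inv3 A 2%nat 1%nat = inv3 A 1%nat 2%nat) by (apply inv3_sym; auto).
  set (sg := fun i j => /2 * K i j - /3 * th * A i j).
  assert (Htr : rsum 3 (fun i => rsum 3 (fun j => inv3 A i j * sg i j)) = 0).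
  { assert (E : rsum 3 (fun i => rsum 3 (fun j => inv3 A i j * sg i j)) =
        rsum 3 (fun i => rsum 3 (fun j => inv3 A i j * (/2 * K i j)))
        - /3 * th * rsum 3 (fun i => rsum 3 (fun j => inv3 A i j * A i j))).
    { unfold sg; simpl. field. }
    rewrite E, trBA by auto. rewrite <- Hth. field. }
  assert (HL := Lsig (inv3 A) sg v HB).
  assert (Hsq := sqsig A K th S10 S20 S21 Hd K10 K20 K21 Hth).
  fold sg in Hsq.
  set (x := rsum 3 (fun l => rsum 3 (fun m =>
     rsum 3 (fun i => inv3 A l i * v i) * sg l m * rsum 3 (fun j => inv3 A m j * v j)))) in *.
  set (q := rsum 3 (fun i => rsum 3 (fun j => inv3 A i j * v i * v j))) in *.
  assert (Hq : q >= 0).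
  { destruct (Req_dec (v 0%nat) 0) as [V0|V0];
    [destruct (Req_dec (v 1%nat) 0) as [V1|V1];
     [destruct (Req_dec (v 2%nat) 0) as [V2|V2]|]|].
    - unfold q; simpl; rewrite V0, V1, V2; lra.
    - destruct HB as [_ Hp]. apply Rle_ge, Rlt_le, Hp. exists 2%nat; split; [lia|exact V2].
    - destruct HB as [_ Hp]. apply Rle_ge, Rlt_le, Hp. exists 1%nat; split; [lia|exact V1].
    - destruct HB as [_ Hp]. apply Rle_ge, Rlt_le, Hp. exists 0%nat; split; [lia|exact V0]. }
  assert (Egoal : rsum 3 (fun i => rsum 3 (fun m => rsum 3 (fun j =>
      (2 * kdelta i m - 3 * rsum 3 (fun l => inv3 A i l * ((/2 * K l m - /3 * th * A l m) / th)))
        * inv3 A m j * v i * v j))) = 2 * q - 3 / th * x).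
  { unfold q, x, sg, kdelta; simpl. rewrite ?B10, ?B20, ?B21. field. exact Hth0. }
  rewrite Egoal.
  apply final_arith with (sg := rsum 3 (fun i => rsum 3 (fun j => rsum 3 (fun m => rsum 3 (fun l =>
              inv3 A i m * inv3 A j l * sg i j * sg m l))))); auto.
  - apply HL; [| | | exact Htr]; unfold sg; simpl; rewrite ?S10, ?S20, ?S21, ?K10, ?K20, ?K21; auto.
  - unfold sg. rewrite Hsq. lra.
Qed.

Lemma dmul f g x lf lg : derivable_pt_lim f x lf -> derivable_pt_lim g x lg ->
  derivable_pt_lim (fun s => f s * g s) x (lf * g x + f x * lg).
Proof. intros; apply (derivable_pt_lim_mult f g); auto. Qed.
Lemma dplus f g x lf lg : derivable_pt_lim f x lf -> derivable_pt_lim g x lg ->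
  derivable_pt_lim (fun s => f s + g s) x (lf + lg).
Proof. intros; apply (derivable_pt_lim_plus f g); auto. Qed.
Lemma dminus f g x lf lg : derivable_pt_lim f x lf -> derivable_pt_lim g x lg ->
  derivable_pt_lim (fun s => f s - g s) x (lf - lg).
Proof. intros; apply (derivable_pt_lim_minus f g); auto. Qed.
Lemma ddiv f g x lf lg : derivable_pt_lim f x lf -> derivable_pt_lim g x lg -> g x <> 0 ->
  derivable_pt_lim (fun s => f s / g s) x ((lf * g x - lg * f x) / (g x)²).
Proof. intros; apply (derivable_pt_lim_div f g); auto. Qed.
Lemma dconst c x : derivable_pt_lim (fun _ => c) x 0.
Proof. apply (derivable_pt_lim_const c). Qed.
Lemma deq f x l1 l2 : derivable_pt_lim f x l1 -> l1 = l2 -> derivable_pt_lim f x l2.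
Proof. intros H ->; exact H. Qed.

Lemma d_rsum n (g : nat -> R -> R) (dg : nat -> R) x :
  (forall i, (i < n)%nat -> derivable_pt_lim (g i) x (dg i)) ->
  derivable_pt_lim (fun s => rsum n (fun i => g i s)) x (rsum n dg).
Proof.
  induction n as [|n IH]; intros H; simpl.
  - apply dconst.
  - apply (dplus (fun s => rsum n (fun i => g i s)) (g n)).
    + apply IH; intros; apply H; lia.
    + apply H; lia.
Qed.

Ltac dtac Hd Hz :=
  repeat first
  [ eapply ddiv; [ | | exact Hz ]
  | eapply dminus | eapply dplus | eapply dmul
  | (apply Hd; lia) | apply dconst ].

Lemma dinv (a a1 : R -> nat -> nat -> R) t
  (Hd : forall i j, (i < 3)%nat -> (j < 3)%nat ->
           derivable_pt_lim (fun s => a s i j) t (a1 t i j))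
  (Hz : det3 (a t) <> 0) :
  forall i j, (i < 3)%nat -> (j < 3)%nat ->
  derivable_pt_lim (fun s => inv3 (a s) i j) t
    (- rsum 3 (fun k => rsum 3 (fun l => inv3 (a t) i k * a1 t k l * inv3 (a t) l j))).
Proof.
  intros i j Hi Hj.
  assert (Hz' : (fun s => det3 (a s)) t <> 0) by exact Hz.
  unfold det3 in Hz'.
  destruct i as [|[|[|i]]]; try lia; destruct j as [|[|[|j]]]; try lia;
  unfold inv3; simpl; unfold det3 in *;
  (eapply deq; [ dtac Hd Hz' | unfold Rsqr; field; exact Hz ]).
Qed.

Definition Gs (gam : nat -> nat -> nat -> R) (A : nat -> nat -> R) : nat -> nat -> nat -> R :=
  Gam 3 A (inv3 A) (fun _ _ _ => 0) gam.
Arguments Gs : simpl never.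
Arguments inv3 : simpl never.

Definition GE (gam : nat -> nat -> nat -> R) (A K : nat -> nat -> R) (c x y : nat) : R :=
  match c, x, y with
  | S c', S x', S y' => Gs gam A c' x' y'
  | O, S i, S j => / 2 * K i j
  | S i, S j, O => rsum 3 (fun k => inv3 A i k * (/ 2 * K j k))
  | S i, O, S j => rsum 3 (fun k => inv3 A i k * (/ 2 * K j k))
  | _, _, _ => 0
  end.

Lemma Gam4_GE gam a a1 t :
  Gam 4 (g4 a t) (g4inv a t) (dg4 a1 t) (C4 gam) = GE gam (a t) (a1 t).
Proof.
  apply functional_extensionality; intro c.
  apply functional_extensionality; intro x.
  apply functional_extensionality; intro y.
  destruct c as [|c]; destruct x as [|x]; destruct y as [|y];
  unfold GE, Gs, Gam, Gam_low; simpl; ring.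
Qed.

Lemma Gs_fold gam A : Gam 3 A (inv3 A) (fun _ _ _ => 0) gam = Gs gam A.
Proof. reflexivity. Qed.

Lemma hamiltonian gam a a1 dG t
  (B10 : inv3 (a t) 1%nat 0%nat = inv3 (a t) 0%nat 1%nat)
  (B20 : inv3 (a t) 2%nat 0%nat = inv3 (a t) 0%nat 2%nat)
  (B21 : inv3 (a t) 2%nat 1%nat = inv3 (a t) 1%nat 2%nat)
  (K10 : a1 t 1%nat 0%nat = a1 t 0%nat 1%nat)
  (K20 : a1 t 2%nat 0%nat = a1 t 0%nat 2%nat)
  (K21 : a1 t 2%nat 1%nat = a1 t 1%nat 2%nat) :
  let B := inv3 (a t) in let k := fun i j => / 2 * a1 t i j in
  Ric4 gam a a1 dG t 0 0 + / 2 * Scal4 gam a a1 dG t =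
  / 2 * Sbar gam a t + / 2 * (theta a a1 t) ^ 2
  - 3 / 2 * rsum 3 (fun i => rsum 3 (fun j => rsum 3 (fun m => rsum 3 (fun l =>
        B i m * B j l * k i j * k m l))))
  - / 2 * rsum 3 (fun i => dG t (S i) (S i) 0%nat)
  + / 2 * rsum 3 (fun i => rsum 3 (fun j => B i j * dG t 0%nat (S i) (S j))).
Proof.
  intros B k. unfold B, k.
  unfold Ric4, Scal4, Sbar, theta, kbar, Scal, Ric, Riem.
  cbv zeta. rewrite Gam4_GE, Gs_fold.
  simpl.
  rewrite B10, B20, B21, K10, K20, K21.
  field.
Qed.

Arguments inv3 : simpl never.
Arguments Gs : simpl never.

Lemma D1 gam a a1 dG t
  (Hd : forall i j, (i < 3)%nat -> (j < 3)%nat ->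
           derivable_pt_lim (fun s => a s i j) t (a1 t i j))
  (Hz : det3 (a t) <> 0)
  (HdG : forall c x y, (c < 4)%nat -> (x < 4)%nat -> (y < 4)%nat ->
           derivable_pt_lim (fun s => Gam4 gam a a1 s c x y) t (dG t c x y)) :
  rsum 3 (fun i => dG t (S i) (S i) 0%nat) =
  rsum 3 (fun i => rsum 3 (fun k =>
     (- rsum 3 (fun m => rsum 3 (fun l => inv3 (a t) i m * a1 t m l * inv3 (a t) l k)))
       * (/ 2 * a1 t i k) + inv3 (a t) i k * dG t 0%nat (S i) (S k))).
Proof.
  apply uniqueness_limite with (f := fun s => rsum 3 (fun i => Gam4 gam a a1 s (S i) (S i) 0%nat)) (x := t).
  - apply (d_rsum 3 (fun i s => Gam4 gam a a1 s (S i) (S i) 0%nat)).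
    intros i Hi; apply HdG; lia.
  - assert (Ef : (fun s => rsum 3 (fun i => Gam4 gam a a1 s (S i) (S i) 0%nat)) =
       (fun s => rsum 3 (fun i => rsum 3 (fun k => inv3 (a s) i k * Gam4 gam a a1 s 0%nat (S i) (S k))))).
    { apply functional_extensionality; intro s. unfold Gam4. rewrite Gam4_GE. simpl. reflexivity. }
    rewrite Ef.
    apply (d_rsum 3 (fun i s => rsum 3 (fun k => inv3 (a s) i k * Gam4 gam a a1 s 0%nat (S i) (S k)))).
    intros i Hi.
    apply (d_rsum 3 (fun k s => inv3 (a s) i k * Gam4 gam a a1 s 0%nat (S i) (S k))).
    intros k Hk.
    eapply deq.
    + apply dmul; [apply dinv; auto | apply HdG; lia].
    + unfold Gam4. rewrite Gam4_GE. simpl. reflexivity.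
Qed.

Lemma loc_uniq f g x r l1 l2 : 0 < r -> (forall y, Rabs (y - x) < r -> f y = g y) ->
  derivable_pt_lim f x l1 -> derivable_pt_lim g x l2 -> l1 = l2.
Proof.
  intros Hr Hfg H1 H2.
  apply uniqueness_limite with (f := g) (x := x); [|exact H2].
  intros eps He. destruct (H1 eps He) as [d Hd].
  assert (Hm : 0 < Rmin d r) by (apply Rmin_pos; [apply cond_pos|exact Hr]).
  exists (mkposreal _ Hm). intros h Hh Hhr. simpl in Hhr.
  rewrite <- (Hfg (x + h)), <- (Hfg x).
  - apply Hd; auto. apply Rlt_le_trans with (1 := Hhr); apply Rmin_l.
  - rewrite Rminus_diag, Rabs_R0; exact Hr.
  - replace (x + h - x) with h by ring. apply Rlt_le_trans with (1 := Hhr); apply Rmin_r.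
Qed.

Theorem mainTheorem8
  (gam : nat -> nat -> nat -> R) (I : R -> Prop)
  (a a1 : R -> nat -> nat -> R) (dG : R -> nat -> nat -> nat -> R)
  (T : R -> nat -> nat -> R) (Lambda : R)
  (Hgam : lie_structure_constants gam)
  (HI : is_open_interval I)
  (Hpos : forall t, I t -> sym_posdef3 (a t))
  (Ha1 : forall t i j, I t -> (i < 3)%nat -> (j < 3)%nat ->
           derivable_pt_lim (fun s => a s i j) t (a1 t i j))
  (HdG : forall t c x y, I t -> (c < 4)%nat -> (x < 4)%nat -> (y < 4)%nat ->
           derivable_pt_lim (fun s => Gam4 gam a a1 s c x y) t (dG t c x y))
  (HEinstein : forall t x y, I t -> (x < 4)%nat -> (y < 4)%nat ->
           Ric4 gam a a1 dG t x y - / 2 * Scal4 gam a a1 dG t * g4 a t x y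
             + Lambda * g4 a t x y = T t x y)
  (Hrho : forall t, I t -> T t 0%nat 0%nat >= 0)
  (HLambda : Lambda >= 0) :
  forall (v : nat -> R) (t : R), I t -> theta a a1 t <> 0 ->
    rsum 3 (fun i => rsum 3 (fun m => rsum 3 (fun j =>
      (2 * kdelta i m - 3 * Sigma_up a a1 t i m) * inv3 (a t) m j * v i * v j)))
    >= - (3 / 2) * (Rmax (Sbar gam a t) 0 / (theta a a1 t) ^ 2)
         * rsum 3 (fun i => rsum 3 (fun j => inv3 (a t) i j * v i * v j)).
Proof.
  intros v t Ht Hth.
  assert (HA := Hpos t Ht).
  destruct (pd_facts _ HA) as (_ & _ & Hdet).
  assert (Hd : det3 (a t) <> 0) by lra.
  assert (S10 : a t 1%nat 0%nat = a t 0%nat 1%nat) by (apply (proj1 HA); lia).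
  assert (S20 : a t 2%nat 0%nat = a t 0%nat 2%nat) by (apply (proj1 HA); lia).
  assert (S21 : a t 2%nat 1%nat = a t 1%nat 2%nat) by (apply (proj1 HA); lia).
  assert (B10 : inv3 (a t) 1%nat 0%nat = inv3 (a t) 0%nat 1%nat) by (apply inv3_sym; auto).
  assert (B20 : inv3 (a t) 2%nat 0%nat = inv3 (a t) 0%nat 2%nat) by (apply inv3_sym; auto).
  assert (B21 : inv3 (a t) 2%nat 1%nat = inv3 (a t) 1%nat 2%nat) by (apply inv3_sym; auto).
  destruct HI as (_ & _ & Hop). destruct (Hop t Ht) as (r & Hr & Hball).
  assert (Ksym : forall i j, (i < 3)%nat -> (j < 3)%nat -> a1 t i j = a1 t j i).
  { intros i j Hi Hj.
    apply (loc_uniq (fun s => a s i j) (fun s => a s j i) t r); auto.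
    intros y Hy. apply (proj1 (Hpos y (Hball y Hy))); auto. }
  assert (K10 : a1 t 1%nat 0%nat = a1 t 0%nat 1%nat) by (apply Ksym; lia).
  assert (K20 : a1 t 2%nat 0%nat = a1 t 0%nat 2%nat) by (apply Ksym; lia).
  assert (K21 : a1 t 2%nat 1%nat = a1 t 1%nat 2%nat) by (apply Ksym; lia).
  assert (HD1 := D1 gam a a1 dG t (fun i j => Ha1 t i j Ht) Hd (fun c x y => HdG t c x y Ht)).
  assert (Hein := HEinstein t 0%nat 0%nat Ht ltac:(lia) ltac:(lia)).
  change (g4 a t 0%nat 0%nat) with (-1) in Hein.
  assert (Hham := hamiltonian gam a a1 dG t B10 B20 B21 K10 K20 K21).
  cbv beta zeta in Hham.
  assert (X : rsum 3 (fun i => rsum 3 (fun k =>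
     (- rsum 3 (fun m => rsum 3 (fun l => inv3 (a t) i m * a1 t m l * inv3 (a t) l k)))
       * (/ 2 * a1 t i k) + inv3 (a t) i k * dG t 0%nat (S i) (S k))) =
     - 2 * rsum 3 (fun i => rsum 3 (fun j => rsum 3 (fun m => rsum 3 (fun l =>
        inv3 (a t) i m * inv3 (a t) j l * (/ 2 * a1 t i j) * (/ 2 * a1 t m l)))))
     + rsum 3 (fun i => rsum 3 (fun j => inv3 (a t) i j * dG t 0%nat (S i) (S j)))).
  { simpl. rewrite B10, B20, B21, K10, K20, K21. field. }
  assert (Hcon : Sbar gam a t + theta a a1 t ^ 2 -
     rsum 3 (fun i => rsum 3 (fun j => rsum 3 (fun m => rsum 3 (fun l =>
        inv3 (a t) i m * inv3 (a t) j l * (/ 2 * a1 t i j) * (/ 2 * a1 t m l))))) >= 0).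
  { assert (Hr0 := Hrho t Ht). lra. }
  unfold Sigma_up, Sigma_low, sigmabar, kbar.
  apply (final_ineq (a t) (a1 t) (Sbar gam a t) v (theta a a1 t)); auto.
Qed.
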